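(* Let $\tau\in\mathbb{C}$ with $\operatorname{Im}(\tau)>0$ and $|\tau|=1$, and let $\Gamma=\{m+n\tau:m,n\in\mathbb{Z}\}$. Let $I$ be an antiholomorphic involution of $\mathbb{C}/\Gamma$ induced by $z\mapsto a\bar z+b$ with $a,b\in\mathbb{C}$ and $a\notin\{1,-1\}$. Then $I$ has a fixpoint.
   Context: An antiholomorphic involution is an antiholomorphic map $I$ with $I\circ I=\mathrm{id}$. *)

(* Defs.v *)
From mathcomp Require Import all_boot all_order all_algebra.
From mathcomp Require Import reals complex.
Set Implicit Arguments. Unset Strict Implicit. Unset Printing Implicit Defensive.
Import Order.TTheory GRing.Theory Num.Theory.
Local Open Scope ring_scope.

Definition in_lattice (R : realType) (tau w : R[i]) : Prop :=
  exists m n : int, w = m%:~R + n%:~R * tau.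

(* f : C -> C induces a well-defined map on C / Gamma *)
Definition descends (R : realType) (tau : R[i]) (f : R[i] -> R[i]) : Prop :=
  forall z w, in_lattice tau (z - w) -> in_lattice tau (f z - f w).

Definition induced_involution (R : realType) (tau : R[i]) (f : R[i] -> R[i]) : Prop :=
  forall z, in_lattice tau (f (f z) - z).

Definition induced_has_fixpoint (R : realType) (tau : R[i]) (f : R[i] -> R[i]) : Prop :=
  exists z, in_lattice tau (f z - z).

(* Main.v *)
Require Import Defs.
From mathcomp Require Import all_boot all_order all_algebra.
From mathcomp Require Import reals complex.
From mathcomp Require Import zify ring.
Import Order.TTheory GRing.Theory Num.Theory.
Local Open Scope ring_scope.

Lemma nosq (x k : int) : 0 <= k -> (k*k) < (x*x) -> (x*x) < ((k+1)*(k+1)) -> False.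
Proof.
move=> hk h1 h2.
have [hx|hx] := lerP 0 x.
  have : k < x by nia.
  nia.
have : k < -x by nia.
nia.
Qed.

Lemma intfacts (x y w : int) : (x*x) + w*y = 1 -> ((y-w)*(y-w)) < 4*(x*x) -> x != 0 ->
  ~(w = 0 /\ (x = 1 \/ x = -1)) -> (w*y = 0) /\ ((w*w)+(y*y) = 1).
Proof.
move=> h1 h2 h3 h4.
have hs : ((y+w)*(y+w)) < 4 by nia.
have : (y + w = 0) \/ (y + w = 1) \/ (y + w = -1) by nia.
case=> [hs0|[hs0|hs0]].
- have hw : w = - y by lia.
  rewrite hw in h1 h4 *.
  have [hy|hy] := lerP 0 y.
    have [hy0|hy0] := eqVneq y 0; first subst y.
      exfalso; apply: h4; split; first by lia.
      have [hx|hx] := lerP 0 x; [left|right]; nia.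
    exfalso; apply: (@nosq x (y)) => //; nia.
  exfalso; apply: (@nosq x (-y)); nia.
- have hw : w = 1 - y by lia.
  rewrite hw in h1 h4 *.
  have [hy|hy] := lerP 2 y.
    exfalso; apply: (@nosq x (y-1)); nia.
  have [hy'|hy'] := lerP y (-1).
    exfalso; apply: (@nosq x (-y)); nia.
  have : y = 0 \/ y = 1 by lia.
  case=> hy0; subst y; lia.
- have hw : w = -1 - y by lia.
  rewrite hw in h1 h4 *.
  have [hy|hy] := lerP 1 y.
    exfalso; apply: (@nosq x (y)); nia.
  have [hy'|hy'] := lerP y (-2).
    exfalso; apply: (@nosq x (-y-1)); nia.
  have : y = 0 \/ y = -1 by lia.
  case=> hy0; subst y; lia.
Qed.

Section Gen.
Variable C : numClosedFieldType.

Lemma Im_lin (tau p q : C) : p \is Num.real -> q \is Num.real ->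
  'Im (p + q * tau) = q * 'Im tau.
Proof.
move=> hp hq; rewrite raddfD /= (ImMl hq) /=.
by rewrite (Creal_ImP _ hp) add0r.
Qed.

Lemma LI (tau p q p' q' : C) : 'Im tau != 0 ->
  p \is Num.real -> q \is Num.real -> p' \is Num.real -> q' \is Num.real ->
  p + q * tau = p' + q' * tau -> p = p' /\ q = q'.
Proof.
move=> ht hp hq hp' hq' e.
have eq : q = q'.
  by apply: (mulIf ht); rewrite -(Im_lin tau p q hp hq) -(Im_lin tau p' q' hp' hq') e.
by split=> //; move: e; rewrite eq => /addIr.
Qed.

Lemma LIz (tau : C) (p q p' q' : int) : 'Im tau != 0 ->
  p%:~R + q%:~R * tau = p'%:~R + q'%:~R * tau -> p = p' /\ q = q'.
Proof.
move=> ht e; have [] := @LI tau _ _ _ _ ht (realz _ p) (realz _ q) (realz _ p') (realz _ q') e.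
by move=> /intr_inj -> /intr_inj ->.
Qed.
End Gen.
Section Main.
Variable C : numClosedFieldType.

Definition Lat (tau w : C) := exists m n : int, w = m%:~R + n%:~R * tau.

Lemma fin_step (a b g : C) : g + a * g^* = a * b^* + b ->
  a * ((b - g)/2)^* + b - (b - g)/2 = g.
Proof.
move=> h. rewrite fmorph_div rmorphB /= rmorph_nat.
have -> : a * ((b^* - g^*) / 2%:R) + b - (b - g) / 2 = (a*b^* + b - a * g^* + g) / 2 by field.
rewrite -h. by field.
Qed.

Theorem mainC (tau a b : C) : 0 < 'Im tau -> `|tau| = 1 ->
  (forall z w, Lat tau (z - w) -> Lat tau ((a * z^* + b) - (a * w^* + b))) ->
  (forall z, Lat tau ((a * (a * z^* + b)^* + b) - z)) ->
  a != 1 -> a != -1 ->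
  exists z, Lat tau ((a * z^* + b) - z).
Proof.
move=> hIm hn hdesc hinv ha1 ha2.
have hIm0 : 'Im tau != 0 by rewrite gt_eqF.
have tu : tau * tau^* = 1 by rewrite -normCK hn expr1n.
have latsub : forall v w, Lat tau v -> Lat tau w -> Lat tau (v - w).
  move=> v w [m1 [n1 ->]] [m2 [n2 ->]]; exists (m1 - m2), (n1 - n2).
  rewrite !rmorphB /=; ring.
have cj : forall p q : int, (p%:~R + q%:~R * tau)^* = p%:~R + q%:~R * tau^*.
  by move=> p q; rewrite rmorphD rmorphM /= !rmorph_int.
have [x [w ea]] : Lat tau a.
  have := hdesc 1 0; rewrite conjC1 conjC0 mulr1 mulr0 add0r addrK; apply.
  by exists 1, 0; rewrite subr0 mul0r addr0.
have [y [v eb]] : Lat tau (a * tau^*).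
  have := hdesc tau 0; rewrite conjC0 mulr0 add0r addrK; apply.
  by exists 0, 1; rewrite subr0 mul1r add0r.
have [m [n ec]] : Lat tau (a * b^* + b).
  by have := hinv 0; rewrite conjC0 mulr0 add0r subr0.
have aa : a * a^* = 1.
  apply/eqP; rewrite -subr_eq0; apply/negPn/negP => hk.
  set k := a * a^* - 1 in hk.
  have hl : Lat tau (k * (k^-1 / 2)).
    have := latsub _ _ (hinv (k^-1 / 2)) (ex_intro _ m (ex_intro _ n ec)).
    rewrite rmorphD rmorphM /= conjCK.
    have -> : a * (a^* * (k^-1 / 2) + b^*) + b - k^-1 / 2 - (a * b^* + b) =
      k * (k^-1 / 2) by rewrite /k; ring.
    by [].
  move: hl; rewrite mulrA mulfV // mul1r => -[m1 [n1 e1]].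
  have e2 : 1%:~R + 0%:~R * tau = (2 * m1)%:~R + (2 * n1)%:~R * tau.
    rewrite !rmorphM /= mul0r addr0 -mulrA -mulrDr -e1.
    by rewrite mulfV // pnatr_eq0.
  have [h1 _] := @LIz C tau _ _ _ _ hIm0 e2.
  lia.
set t := 'Re tau. set s := 'Im tau.
have Et : tau = t + 'i * s by rewrite {1}[tau]Crect.
have Eu : tau^* = t - 'i * s by rewrite {1}[tau]Crect conjC_rect.
have tsum : tau + tau^* = 2 * t by rewrite Eu {1}Et; ring.
have ts : t * t + s * s = 1.
  rewrite -tu Eu Et.
  have -> : (t + 'i * s) * (t - 'i * s) = t * t - ('i * 'i) * s * s by ring.
  by rewrite mulCii; ring.
have e6 : x%:~R + w%:~R * tau = (- v)%:~R + (y%:~R + v%:~R * (2 * t)) * tau.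
  rewrite -ea.
  have -> : a = (a * tau^*) * tau by rewrite -mulrA [tau^* * tau]mulrC tu mulr1.
  rewrite eb -tsum; apply/eqP; rewrite -subr_eq0.
  have -> : (y%:~R + v%:~R * tau) * tau - ((- v)%:~R + (y%:~R + v%:~R * (tau + tau^*)) * tau)
     = v%:~R * (1 - tau * tau^*) by rewrite rmorphN /=; ring.
  by rewrite tu subrr mulr0.
have treal : t \is Num.real by apply: Creal_Re.
have [hxv hw] := @LI C tau _ _ _ _ hIm0 (realz _ x) (realz _ w) (realz _ (- v))
   (realD (realz _ y) (realM (realz _ v) (realM (realz _ 2) treal))) e6.
have hxv' : x = - v := intr_inj hxv.
have E2 : x%:~R * (2 * t) = y%:~R - w%:~R :> C.
  by rewrite hw hxv' rmorphN /=; ring.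
have ai' : ((x * x + w * y)%:~R : C) = 1.
  transitivity (a * a^*); last exact aa.
  rewrite ea cj.
  apply/eqP; rewrite -subr_eq0.
  have -> : (x * x + w * y)%:~R - (x%:~R + w%:~R * tau) * (x%:~R + w%:~R * tau^*) =
     - (x%:~R * w%:~R * (tau + tau^* - 2 * t)) - w%:~R * w%:~R * (tau * tau^* - 1)
     - w%:~R * (x%:~R * (2 * t) - (y%:~R - w%:~R)) :> C by ring.
  by rewrite tsum tu E2 !subrr; apply/eqP; ring.
have ai : x * x + w * y = 1 by apply/eqP; rewrite -(eqr_int C) ai'.
have fixc : m = m * x + n * y /\ n = m * w + n * v.
  apply: (@LIz C tau m n (m * x + n * y) (m * w + n * v) hIm0); rewrite -ec.
  have -> : a * b^* + b = a * (a * b^* + b)^*.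
    by rewrite rmorphD rmorphM /= conjCK mulrDr mulrA aa mul1r addrC.
  rewrite ec rmorphD rmorphM /= !rmorph_int mulrDr [a * (_ * _)]mulrCA eb ea.
  rewrite !rmorphD !rmorphM /=; ring.
case: fixc => F1 F2.
have [x0|xn0] := eqVneq x 0.
  exists ((b - m%:~R) / 2); rewrite fin_step.
    by exists m, 0; rewrite mul0r addr0.
  rewrite ec ea rmorph_int.
  have -> : n = m * w by lia.
  by rewrite x0 rmorphM /=; ring.
have hlt : (y - w) * (y - w) < 4 * (x * x).
  rewrite -subr_gt0 -(ltr0z C).
  have -> : (4 * (x * x) - (y - w) * (y - w))%:~R =
     4 * (x%:~R * x%:~R) * (s * s) + 4 * (x%:~R * x%:~R) * (1 - (t * t + s * s)) +
     (x%:~R * (2 * t) - (y - w)%:~R) * (x%:~R * (2 * t) + (y - w)%:~R) :> C.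
    by rewrite !rmorphB /=; ring.
  rewrite ts rmorphB /= E2 !subrr mulr0 mul0r !addr0.
  apply: mulr_gt0; last by apply: mulr_gt0.
  apply: mulr_gt0; first by [].
  by rewrite -rmorphM /= ltr0z; nia.
have hnot : ~ (w = 0 /\ (x = 1 \/ x = -1)).
  case=> w0 [x1|x1]; [move: ha1 | move: ha2]; rewrite ea w0 x1 mul0r addr0 ?rmorphN /=;
  by rewrite eqxx.
have [wy0 wy1] := @intfacts x y w ai hlt xn0 hnot.
exists ((b - ((w * n)%:~R + (y * m)%:~R * tau)) / 2); rewrite fin_step.
  by exists (w * n), (y * m).
rewrite ec ea cj.
have h2 : n * (1 + x) = m * w.
  have : n * v = - (n * x) by rewrite hxv' mulrN opprK.
  lia.
have h1 : m * (1 - x) = n * y by lia.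
have P0 : w * n * (1 + x) + y * y * m - m = 0.
  have -> : w * n * (1 + x) + y * y * m - m = w * (n * (1 + x)) + y * y * m - m by ring.
  rewrite h2.
  have -> : w * (m * w) + y * y * m - m = m * ((w * w + y * y) - 1) by ring.
  by rewrite wy1 subrr mulr0.
have P1 : y * m * (1 - x) + w * w * n - n = 0.
  have -> : y * m * (1 - x) + w * w * n - n = y * (m * (1 - x)) + w * w * n - n by ring.
  rewrite h1.
  have -> : y * (n * y) + w * w * n - n = n * ((w * w + y * y) - 1) by ring.
  by rewrite wy1 subrr mulr0.
apply/eqP; rewrite -subr_eq0.
have -> : ((w * n)%:~R + (y * m)%:~R * tau) + (x%:~R + w%:~R * tau) * ((w * n)%:~R + (y * m)%:~R * tau^*) - (m%:~R + n%:~R * tau) =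
  (w * n * (1 + x) + y * y * m - m)%:~R + (y * m * (1 - x) + w * w * n - n)%:~R * tau
  + (y * m)%:~R * (x%:~R * (tau + tau^*) - (y%:~R - w%:~R)) + (w * (y * m))%:~R * (tau * tau^* - 1) :> C.
  by rewrite !rmorphB !rmorphD !rmorphM /=; ring.
by rewrite P0 P1 tsum E2 tu !subrr; apply/eqP; ring.
Qed.
End Main.

Theorem lemma2p7 (R : realType) (tau a b : R[i]) :
  0 < 'Im tau -> `|tau| = 1 ->
  descends tau (fun z => a * z^* + b) ->
  induced_involution tau (fun z => a * z^* + b) ->
  a != 1 -> a != -1 ->
  induced_has_fixpoint tau (fun z => a * z^* + b).
Proof.
move=> h1 h2 h3 h4 h5 h6.
exact: (@mainC _ tau a b h1 h2 h3 h4 h5 h6).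
Qed.
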